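(* There exists a non-abelian right-orderable group which has no non-trivial proper normal right relatively convex subgroups but which is not simple; indeed it has a proper non-trivial centre. Such a group can be obtained as $G/N$, where $G=\langle x,y,z\mid x^2=y^3=z^7=xyz\rangle$ and $N$ is a maximal proper normal right relatively convex subgroup of $G$.
   Context: A group is right-orderable if it admits a total order $\le$ with $x\le y\Rightarrow xz\le yz$. A subgroup $H$ of a right-orderable group $G$ is right relatively convex if there is a right order on $G$ with respect to which $H$ is convex (i.e., $h_1\le g\le h_2$ with $h_1,h_2\in H$ implies $g\in H$). The group $G=\langle x,y,z\mid x^2=y^3=z^7=xyz\rangle$ is right-orderable and perfect (G. M. Bergman). *)

(* Defs.v *)
From Stdlib Require Import List.
Set Implicit Arguments.

Record Group := mkGroup {
  carrier :> Type;
  gmul : carrier -> carrier -> carrier;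
  gone : carrier;
  ginv : carrier -> carrier;
  gmulA : forall a b c, gmul a (gmul b c) = gmul (gmul a b) c;
  gmul1g : forall a, gmul gone a = a;
  gmulVg : forall a, gmul (ginv a) a = gone
}.

Section GroupDefs.
Variable G : Group.

Definition subgroup (H : G -> Prop) : Prop :=
  H (gone G) /\ (forall a b, H a -> H b -> H (gmul G a b)) /\
  (forall a, H a -> H (ginv G a)).

Definition normal_subgroup (H : G -> Prop) : Prop :=
  subgroup H /\ forall g h, H h -> H (gmul G (gmul G (ginv G g) h) g).

Definition right_order (le : G -> G -> Prop) : Prop :=
  (forall a, le a a) /\
  (forall a b, le a b -> le b a -> a = b) /\
  (forall a b c, le a b -> le b c -> le a c) /\
  (forall a b, le a b \/ le b a) /\
  (forall a b c, le a b -> le (gmul G a c) (gmul G b c)).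

Definition right_orderable : Prop := exists le, right_order le.

Definition convex_wrt (le : G -> G -> Prop) (H : G -> Prop) : Prop :=
  forall h1 h2 g, H h1 -> H h2 -> le h1 g -> le g h2 -> H g.

Definition right_rel_convex (H : G -> Prop) : Prop :=
  subgroup H /\ exists le, right_order le /\ convex_wrt le H.

Definition proper (H : G -> Prop) : Prop := exists g, ~ H g.
Definition nontrivial (H : G -> Prop) : Prop := exists h, H h /\ h <> gone G.

Definition prop_normal_rrc (H : G -> Prop) : Prop :=
  normal_subgroup H /\ right_rel_convex H /\ proper H.

Definition maximal_prop_normal_rrc (N : G -> Prop) : Prop :=
  prop_normal_rrc N /\
  forall M, prop_normal_rrc M -> (forall g, N g -> M g) -> forall g, M g -> N g.

Definition abelian : Prop := forall a b, gmul G a b = gmul G b a.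

Definition central (g : G) : Prop := forall h, gmul G g h = gmul G h g.

Definition simple_group : Prop :=
  (exists g, g <> gone G) /\
  forall N, normal_subgroup N -> (forall n, N n -> n = gone G) \/ (forall g, N g).

Definition perfect : Prop :=
  forall g, exists l : list (G * G),
    g = List.fold_right (fun p acc =>
          gmul G (gmul G (gmul G (ginv G (fst p)) (ginv G (snd p))) (gmul G (fst p) (snd p))) acc)
        (gone G) l.

Definition good_group : Prop :=
  ~ abelian /\ right_orderable /\
  (forall M, normal_subgroup M -> right_rel_convex M -> proper M -> nontrivial M -> False) /\
  ~ simple_group /\
  (exists g, central g /\ g <> gone G) /\ (exists g, ~ central g).

End GroupDefs.

Definition hom (G H : Group) (f : G -> H) : Prop :=
  forall a b, f (gmul G a b) = gmul H (f a) (f b).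

Arguments hom : clear implicits.
(* (G, x, y, z) is a presentation of <x,y,z | x^2 = y^3 = z^7 = xyz>,
   expressed by its universal property. *)
Definition rel237 (H : Group) (a b c : H) : Prop :=
  let m := gmul H in
  m a a = m b (m b b) /\
  m b (m b b) = m c (m c (m c (m c (m c (m c c))))) /\
  m c (m c (m c (m c (m c (m c c))))) = m (m a b) c.

Arguments rel237 : clear implicits.
Definition presents237 (G : Group) (x y z : G) : Prop :=
  rel237 G x y z /\
  forall (H : Group) (a b c : H), rel237 H a b c ->
    (exists f : G -> H, hom G H f /\ f x = a /\ f y = b /\ f z = c) /\
    (forall f1 f2 : G -> H, hom G H f1 -> hom G H f2 ->
       f1 x = f2 x -> f1 y = f2 y -> f1 z = f2 z -> forall g, f1 g = f2 g).
Arguments presents237 : clear implicits.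

(* Main.v *)
From mathcomp Require Import all_boot all_fingroup.
From mathcomp Require Import boolp classical_sets filter.
From Stdlib Require Import ClassicalEpsilon ProofIrrelevance FunctionalExtensionality PropExtensionality.
Require Import Defs.

Section Basic.
Variable G : Group.
Local Notation "a ** b" := (gmul G a b) (at level 40, left associativity).
Local Notation one := (gone G).
Local Notation inv := (ginv G).

Lemma mulgV' a : a ** inv a = one.
Proof.
rewrite -{1}(gmul1g G (a ** inv a)) -{1}(gmulVg G (inv a)).
by rewrite -gmulA (gmulA _ (inv a) a) gmulVg gmul1g gmulVg.
Qed.
Lemma mulg1' a : a ** one = a.
Proof. by rewrite -(gmulVg G a) gmulA mulgV' gmul1g. Qed.
Lemma mulKg' a b : inv a ** (a ** b) = b.
Proof. by rewrite gmulA gmulVg gmul1g. Qed.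
Lemma mulKVg' a b : a ** (inv a ** b) = b.
Proof. by rewrite gmulA mulgV' gmul1g. Qed.
Lemma mulgK' a b : a ** b ** inv b = a.
Proof. by rewrite -gmulA mulgV' mulg1'. Qed.
Lemma mulgKV' a b : a ** inv b ** b = a.
Proof. by rewrite -gmulA gmulVg mulg1'. Qed.
Lemma mulg_canl a b c : a ** b = a ** c -> b = c.
Proof. by move=> H; rewrite -(mulKg' a b) H mulKg'. Qed.
Lemma inv_uniq a b : a ** b = one -> inv a = b.
Proof. by move=> H; apply: (mulg_canl a); rewrite mulgV' H. Qed.
Lemma invK' a : inv (inv a) = a.
Proof. by apply: inv_uniq; rewrite gmulVg. Qed.
Lemma invM' a b : inv (a ** b) = inv b ** inv a.
Proof. by apply: inv_uniq; rewrite -gmulA (gmulA _ b) mulgV' gmul1g mulgV'. Qed.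
Lemma inv1' : inv one = one.
Proof. by apply: inv_uniq; rewrite gmul1g. Qed.
Lemma mulg_canr a b c : a ** c = b ** c -> a = b.
Proof. by move=> H; rewrite -(mulgK' a c) H mulgK'. Qed.

Definition cone (N P : G -> Prop) :=
  (forall a b, P a -> P b -> P (a ** b)) /\
  (forall n p, N n -> P p -> P (n ** p)) /\
  (forall g, P g -> ~ N g) /\
  (forall g, N g \/ P g \/ P (inv g)).

Lemma sub1 {N} : subgroup G N -> N one. Proof. by case. Qed.
Lemma subM {N a b} : subgroup G N -> N a -> N b -> N (a ** b).
Proof. by case=> _ [H _]; apply: H. Qed.
Lemma subV {N a} : subgroup G N -> N a -> N (inv a).
Proof. by case=> _ [_ H]; apply: H. Qed.
Lemma subVE {N a} : subgroup G N -> N (inv a) -> N a.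
Proof. by move=> sN /(subV sN); rewrite invK'. Qed.

Lemma cone_PN {N P p n} : normal_subgroup G N -> cone N P -> P p -> N n -> P (p ** n).
Proof.
move=> [sN nN] [Pm [NP _]] Pp Nn.
have -> : p ** n = (p ** n ** inv p) ** p by rewrite mulgKV'.
apply: NP Pp; have := nN (inv p) n Nn; by rewrite invK'.
Qed.

Lemma rrc_of_cone N P : normal_subgroup G N -> right_orderable G -> cone N P ->
  right_rel_convex G N.
Proof.
move=> nN [le0 [r1 [r2 [r3 [r4 r5]]]]] cP.
have sN := nN.1.
have [Pm [NP [Pd Pt]]] := cP.
split=> //.
pose le g h := P (h ** inv g) \/ (N (h ** inv g) /\ le0 g h).
have PV1 a : P a -> P (inv a) -> False.
  move=> Pa Pia; have := Pm _ _ Pa Pia; rewrite mulgV' => /Pd; apply; exact: sub1.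
have PN a : P a -> N a -> False by move=> /Pd.
exists le; split; [split; [|split; [|split; [|split]]]|].
- by move=> a; right; rewrite mulgV'; split; [exact: sub1|].
- move=> a b [Pba|[Nba lab]] [Pab|[Nab lba]].
  + have : inv (b ** inv a) = a ** inv b by rewrite invM' invK'.
    by move=> E; exfalso; apply: (PV1 _ Pba); rewrite E.
  + exfalso; apply: (PN _ Pba); apply: (subVE sN); by rewrite invM' invK'.
  + exfalso; apply: (PN _ Pab); apply: (subVE sN); by rewrite invM' invK'.
  + exact: r2.
- move=> a b c Hab Hbc.
  have E : c ** inv a = (c ** inv b) ** (b ** inv a) by rewrite -gmulA mulKg'.
  case: Hab => [Pba|[Nba lab]]; case: Hbc => [Pcb|[Ncb lbc]].
  + by left; rewrite E; apply: Pm.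
  + by left; rewrite E; apply: NP.
  + by left; rewrite E; apply: (cone_PN nN cP).
  + by right; rewrite E; split; [exact: subM|exact: r3 lbc].
- move=> a b; case: (Pt (b ** inv a)) => [Nba|[Pba|Pab]].
  + case: (r4 a b) => H; [left; right; split=> //|right; right; split=> //].
    by apply: (subVE sN); rewrite invM' invK'.
  + by left; left.
  + by right; left; move: Pab; rewrite invM' invK'.
- move=> a b c; rewrite /le invM' gmulA mulgK'; case=> [H|[H1 H2]]; [by left|].
  by right; split=> //; apply: r5.
- move=> h1 h2 g Nh1 Nh2 [P1|[N1 _]] H2; last first.
    by rewrite -(mulgKV' g h1); apply: subM.
  case: H2 => [P2|[N2 _]]; last first.
    have : N (inv (h2 ** inv g)) by apply: subV.
    by rewrite invM' invK' => /(subM sN)/(_ Nh2); rewrite mulgKV'.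
  exfalso; apply: (PN (h2 ** inv h1)).
    by rewrite -(mulgKV' h2 g) -gmulA; apply: Pm.
  by apply: subM=> //; apply: subV.
Qed.

Lemma cone_of_rrc N : normal_subgroup G N -> right_rel_convex G N ->
  exists P, cone N P.
Proof.
move=> [sN nN] [_ [le [[r1 [r2 [r3 [r4 r5]]]] cv]]].
exists (fun g => ~ N g /\ le one g).
have leV g : le g one -> le one (inv g).
  by move=> /(r5 _ _ (inv g)); rewrite mulgV' gmul1g.
split; [|split; [|split]].
- move=> a b [Na la] [Nb lb]; have lb2 : le b (a ** b).
    by have := r5 _ _ b la; rewrite gmul1g.
  have l1 := r3 _ _ _ lb lb2.
  split=> // Nab; apply: Nb; exact: (cv one (a ** b) b (sub1 sN) Nab lb lb2).
- move=> n p Nn [Np lp]; split.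
    by move=> Nnp; apply: Np; rewrite -(mulKg' n p); apply: subM => //; apply: subV.
  case: (r4 one (n ** p)) => // H; exfalso; apply: Np.
  have h1 : le n (inv p) by have := r5 _ _ (inv p) H; rewrite mulgK' gmul1g.
  have h2 : le (inv p) one by have := r5 _ _ (inv p) lp; rewrite gmul1g mulgV'.
  apply: (subVE sN); exact: (cv n one (inv p) Nn (sub1 sN) h1 h2).
- by move=> g [].
- move=> g; case: (classic (N g)) => Ng; [by left|right].
  case: (r4 one g) => H; [by left|right; split; [|exact: leV]].
  by move=> /(subVE sN).
Qed.

End Basic.
Arguments mulgV' {G}. Arguments mulg1' {G}. Arguments mulKg' {G}. Arguments mulKVg' {G}.
Arguments mulgK' {G}. Arguments mulgKV' {G}. Arguments mulg_canl {G}. Arguments inv_uniq {G}.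
Arguments invK' {G}. Arguments invM' {G}. Arguments inv1' {G}. Arguments mulg_canr {G}.
Arguments sub1 {G N}. Arguments subM {G N a b}. Arguments subV {G N a}. Arguments subVE {G N a}.
Arguments cone_PN {G N P p n}.
Arguments cone_of_rrc {G N}. Arguments rrc_of_cone {G N P}.

Section Quot.
Variable G : Group.
Local Notation "a ** b" := (gmul G a b) (at level 40, left associativity).
Local Notation one := (gone G).
Local Notation inv := (ginv G).
Variable N : G -> Prop.
Hypothesis nN : normal_subgroup G N.
Let sN := nN.1.

Lemma nconj g h : N h -> N (g ** h ** inv g).
Proof. by move=> Nh; have := nN.2 (inv g) h Nh; rewrite invK'. Qed.

Definition cls (g : G) : G -> Prop := fun h => N (h ** inv g).
Definition Qc := {S : G -> Prop | exists g, S = cls g}.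

Lemma cls_eq a b : cls a = cls b <-> N (a ** inv b).
Proof.
split=> [E|Nab].
  have : cls a a by rewrite /cls mulgV'; exact: sub1 sN.
  by rewrite E.
apply: functional_extensionality => h; apply: propositional_extensionality.
rewrite /cls; split=> H.
  by rewrite -(mulgKV' h a) -gmulA; apply: subM.
have Nba : N (b ** inv a) by apply: (subVE sN); rewrite invM' invK'.
by rewrite -(mulgKV' h b) -gmulA; apply: subM.
Qed.

Definition rep (q : Qc) : G :=
  proj1_sig (constructive_indefinite_description _ (proj2_sig q)).
Lemma rep_spec q : proj1_sig q = cls (rep q).
Proof. rewrite /rep; case: constructive_indefinite_description => //. Qed.
Definition phi g : Qc := exist _ (cls g) (ex_intro _ g erefl).

Lemma Qc_ext (q r : Qc) : proj1_sig q = proj1_sig r -> q = r.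
Proof.
case: q => S hS; case: r => T hT /= E; subst T; f_equal; apply: proof_irrelevance.
Qed.
Lemma phi_rep q : phi (rep q) = q.
Proof. by apply: Qc_ext; rewrite /= -rep_spec. Qed.
Lemma phi_eq a b : phi a = phi b <-> N (a ** inv b).
Proof.
rewrite -cls_eq; split=> [E|E]; first by have := congr1 (@proj1_sig _ _) E.
by apply: Qc_ext.
Qed.
Lemma phi_surj q : exists g, q = phi g.
Proof. by exists (rep q); rewrite phi_rep. Qed.
Lemma rep_phi a : N (rep (phi a) ** inv a).
Proof. by apply/phi_eq; rewrite phi_rep. Qed.

Definition qmul (q r : Qc) : Qc := phi (rep q ** rep r).
Definition qinv (q : Qc) : Qc := phi (inv (rep q)).
Definition qone : Qc := phi one.

Lemma qmul_phi a b : qmul (phi a) (phi b) = phi (a ** b).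
Proof.
apply/phi_eq; rewrite invM'.
set a' := rep (phi a); set b' := rep (phi b).
have -> : a' ** b' ** (inv b ** inv a) = (a' ** (b' ** inv b) ** inv a') ** (a' ** inv a).
  by rewrite !gmulA mulgKV'.
apply: subM => //; [apply: nconj; exact: rep_phi|exact: rep_phi].
Qed.

Lemma qinv_phi a : qinv (phi a) = phi (inv a).
Proof.
apply/phi_eq; rewrite invK'.
set a' := rep (phi a).
have : N (inv a ** (a' ** inv a) ** inv (inv a)) by apply: nconj; exact: rep_phi.
rewrite invK' gmulA mulgKV' => H.
by apply: (subVE sN); rewrite invM' invK'.
Qed.

Lemma qA : forall a b c, qmul a (qmul b c) = qmul (qmul a b) c.
Proof.
move=> a b c; case: (phi_surj a) => x ->; case: (phi_surj b) => y ->;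
case: (phi_surj c) => z ->; by rewrite !qmul_phi gmulA.
Qed.
Lemma q1 : forall a, qmul qone a = a.
Proof. by move=> a; case: (phi_surj a) => x ->; rewrite /qone qmul_phi gmul1g. Qed.
Lemma qV : forall a, qmul (qinv a) a = qone.
Proof. by move=> a; case: (phi_surj a) => x ->; rewrite qinv_phi qmul_phi gmulVg. Qed.

Definition QG : Group := @mkGroup Qc qmul qone qinv qA q1 qV.

Lemma phi_hom : hom G QG phi.
Proof. by move=> a b; rewrite /= qmul_phi. Qed.
Lemma phi_ker g : phi g = gone QG <-> N g.
Proof. by rewrite /= /qone phi_eq inv1' mulg1'. Qed.
Lemma phi_surj' (q : QG) : exists g, phi g = q.
Proof. by case: (phi_surj q) => g ->; exists g. Qed.

Variable P : G -> Prop.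
Hypothesis cP : cone G N P.

Lemma cone_shift a a' b b' : N (a' ** inv a) -> N (b' ** inv b) ->
  P (b ** inv a) -> P (b' ** inv a').
Proof.
move=> Na Nb Pba.
have -> : b' ** inv a' = (b' ** inv b) ** (b ** inv a) ** inv (a' ** inv a).
  by rewrite invM' invK' !gmulA mulgKV' mulgKV'.
apply: (cone_PN nN cP); last by apply: subV.
by apply: cP.2.1.
Qed.

Definition qle (q r : QG) : Prop :=
  P (rep r ** inv (rep q)) \/ N (rep r ** inv (rep q)).

Lemma qle_phi a b : qle (phi a) (phi b) <-> P (b ** inv a) \/ N (b ** inv a).
Proof.
have Na := rep_phi a; have Nb := rep_phi b.
have Na' : N (a ** inv (rep (phi a))) by apply: (subVE sN); rewrite invM' invK'.
have Nb' : N (b ** inv (rep (phi b))) by apply: (subVE sN); rewrite invM' invK'.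
rewrite /qle; split=> [[H|H]|[H|H]].
- by left; apply: (cone_shift _ _ _ _ Na' Nb' H).
- right; have -> : b ** inv a = (b ** inv (rep (phi b))) ** (rep (phi b) ** inv (rep (phi a)))
     ** (rep (phi a) ** inv a) by rewrite !gmulA mulgKV' mulgKV'.
  by apply: (subM sN); first apply: (subM sN).
- by left; apply: (cone_shift _ _ _ _ Na Nb H).
- right; have -> : rep (phi b) ** inv (rep (phi a)) = (rep (phi b) ** inv b) ** (b ** inv a)
     ** (a ** inv (rep (phi a))) by rewrite !gmulA mulgKV' mulgKV'.
  by apply: (subM sN); first apply: (subM sN).
Qed.

Lemma QG_ro : right_orderable QG.
Proof.
have [Pm [NP [Pd Pt]]] := cP.
exists qle; split; [|split; [|split; [|split]]].
- move=> q; case: (phi_surj q) => a ->; apply/qle_phi; right; rewrite mulgV'; exact: sub1.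
- move=> q r; case: (phi_surj q) => a ->; case: (phi_surj r) => b ->.
  move/qle_phi => H1 /qle_phi H2; apply/phi_eq.
  have E : inv (b ** inv a) = a ** inv b by rewrite invM' invK'.
  case: H2 => [P2|//]; case: H1 => [P1|N1]; exfalso.
    apply: (Pd one); last exact: sub1 sN.
    have -> : one = (b ** inv a) ** (a ** inv b) by rewrite gmulA mulgKV' mulgV'.
    by apply: Pm.
  by apply: (Pd _ P2); rewrite -E; apply: (subV sN).
- move=> q r s; case: (phi_surj q) => a ->; case: (phi_surj r) => b ->;
  case: (phi_surj s) => c ->; move/qle_phi => H1 /qle_phi H2; apply/qle_phi.
  have -> : c ** inv a = (c ** inv b) ** (b ** inv a) by rewrite -gmulA mulKg'.
  case: H1 => [P1|N1]; case: H2 => [P2|N2].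
  + by left; apply: Pm.
  + by left; apply: NP.
  + by left; apply: (cone_PN nN cP).
  + by right; apply: subM.
- move=> q r; case: (phi_surj q) => a ->; case: (phi_surj r) => b ->.
  case: (Pt (b ** inv a)) => [H|[H|H]].
  + by left; apply/qle_phi; right.
  + by left; apply/qle_phi; left.
  + by right; apply/qle_phi; left; move: H; rewrite invM' invK'.
- move=> q r s; case: (phi_surj q) => a ->; case: (phi_surj r) => b ->;
  case: (phi_surj s) => c ->; move/qle_phi => H.
  by rewrite /= !qmul_phi; apply/qle_phi; rewrite invM' gmulA mulgK'.
Qed.

End Quot.
Arguments QG {G N}. Arguments phi {G} N. Arguments phi_hom {G N}. Arguments phi_ker {G N}.
Arguments phi_surj' {G N}. Arguments QG_ro {G N} nN {P}.

Local Open Scope classical_set_scope.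
Section Chain.
Variable G : Group.
Local Notation "a ** b" := (gmul G a b) (at level 40, left associativity).
Local Notation one := (gone G).
Local Notation inv := (ginv G).
Hypothesis RO : right_orderable G.
Variable bad : G -> Prop.

Lemma chain_union (C : set (G -> Prop)) :
  (forall N, C N -> normal_subgroup G N /\ exists P, cone G N P) ->
  (forall N, C N -> forall g, N g -> ~ bad g) -> (exists g, bad g) ->
  total_on C subset -> (exists N, C N) ->
  prop_normal_rrc G (fun g => exists N, C N /\ N g).
Proof.
move=> HC Hbad [b0 b0bad] tot [N0 CN0].
set U := fun g => exists N, C N /\ N g.
have sub_of N1 N2 a b : C N1 -> C N2 -> N1 a -> N2 b ->
    exists N, C N /\ N a /\ N b.
  move=> C1 C2 Na Nb; case: (tot _ _ C1 C2) => S.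
    by exists N2; split=> //; split=> //; apply: S.
  by exists N1; split=> //; split=> //; apply: S.
have nU : normal_subgroup G U.
  split; first split; [|split|].
  - by exists N0; split=> //; apply: sub1 (HC _ CN0).1.1.
  - move=> a b [N1 [C1 Na]] [N2 [C2 Nb]].
    case: (sub_of _ _ _ _ C1 C2 Na Nb) => N [CN [Na' Nb']].
    by exists N; split=> //; apply: subM (HC _ CN).1.1 Na' Nb'.
  - move=> a [N [CN Na]]; exists N; split=> //; exact: subV (HC _ CN).1.1 Na.
  - move=> g h [N [CN Nh]]; exists N; split=> //; exact: (HC _ CN).1.2.
split=> //; split; last first.
  exists b0 => -[N [CN Nb]]; exact: Hbad CN _ Nb b0bad.
have ex N : exists P, C N -> cone G N P.
  case: (classic (C N)) => CN; last by exists (fun _ => False).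
  by case: (HC _ CN) => _ [P cP]; exists P.
pose Pof N := proj1_sig (constructive_indefinite_description _ (ex N)).
have PofP N : C N -> cone G N (Pof N).
  by rewrite /Pof; case: constructive_indefinite_description.
pose F0 : set_system (G -> Prop) := fun S => exists N1, C N1 /\
   forall N, C N -> N1 `<=` N -> S N.
have FF : Filter F0.
  split.
  - by exists N0; split.
  - move=> A B [N1 [C1 HA]] [N2 [C2 HB]].
    case: (tot _ _ C1 C2) => S.
      exists N2; split=> // N CN S2; split; [apply: HA=> //|apply: HB=> //].
      by move=> t /S /S2.
    exists N1; split=> // N CN S1; split; [apply: HA=> //|apply: HB=> //].
    by move=> t /S /S1.
  - by move=> A B AB [N1 [C1 HA]]; exists N1; split=> // N CN S; apply: AB; apply: HA.
have PF : ProperFilter F0.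
  split=> //; move=> [N1 [C1 H]]; exact: (H N1 C1).
have [Uf [UU F0U]] := ultraFilterLemma PF.
have UC : Uf C by apply: F0U; exists N0; split.
have Utail N1 : C N1 -> Uf (fun N => C N /\ N1 `<=` N).
  by move=> C1; apply: F0U; exists N1; split=> // N CN S.
have Uflt : Filter Uf by exact: filter_filter.
have Unot : ~ Uf set0 by apply: filter_not_empty.
pose Pinf g := Uf (fun N => Pof N g).
have cPinf : cone G U Pinf.
  split; [|split; [|split]].
  - move=> a b Pa Pb; rewrite /Pinf.
    apply: (filterS (P := (fun N => Pof N a) `&` (fun N => Pof N b) `&` C)).
      by move=> N [[Pa' Pb'] CN]; apply: (PofP N CN).1.
    by apply: filterI => //; apply: filterI.
  - move=> n p [N1 [C1 Nn]] Pp; rewrite /Pinf.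
    apply: (filterS (P := (fun N => C N /\ N1 `<=` N) `&` (fun N => Pof N p))).
      by move=> N [[CN S] Pp']; apply: (PofP N CN).2.1 => //; apply: S.
    exact: filterI (Utail _ C1) Pp.
  - move=> g Pg [N1 [C1 Ng]]; apply: Unot.
    apply: (filterS (P := (fun N => C N /\ N1 `<=` N) `&` (fun N => Pof N g))).
      by move=> N [[CN S] Pg']; apply: ((PofP N CN).2.2.1 g Pg'); apply: S.
    exact: filterI (Utail _ C1) Pg.
  - move=> g; case: (classic (U g)) => Ug; [by left|right].
    case: (in_ultra_setVsetC (fun N => Pof N g) UU) => H; [by left|right].
    apply: (filterS (P := (~` (fun N => Pof N g)) `&` C)).
      move=> N [nP CN]; case: ((PofP N CN).2.2.2 g) => [Ng|[//|//]].
      by exfalso; apply: Ug; exists N.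
    exact: filterI.
exact: rrc_of_cone nU RO cPinf.
Qed.

End Chain.
Local Open Scope classical_set_scope.

Section S7.
Local Open Scope group_scope.
Definition mk7 (s : seq nat) (i : 'I_7) : 'I_7 := Ordinal (@ltn_pmod (nth 0%N s i) 7 isT).
Definition fa := mk7 [:: 1;0;3;2;4;5;6]%N.
Definition fb := mk7 [:: 0;2;4;5;1;6;3]%N.
Definition fbi := mk7 [:: 0;4;1;6;2;3;5]%N.
Definition fc := mk7 [:: 1;4;0;6;3;2;5]%N.
Definition fci := mk7 [:: 2;0;5;4;1;6;3]%N.
Ltac ocase := let i := fresh in let Hi := fresh in
  move=> [i Hi]; apply/val_inj; do 7 (case: i Hi => [|i] Hi; first by []); by [].
Lemma fa_inj : injective fa. Proof. apply: (can_inj (g:=fa)); ocase. Qed.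
Lemma fb_inj : injective fb. Proof. apply: (can_inj (g:=fbi)); ocase. Qed.
Lemma fc_inj : injective fc. Proof. apply: (can_inj (g:=fci)); ocase. Qed.
Definition pa := perm fa_inj.
Definition pb := perm fb_inj.
Definition pc := perm fc_inj.
Ltac pcase := apply/permP; rewrite /pa /pb /pc; let j := fresh in intro j;
  rewrite ?permM ?permE; revert j; ocase.
Lemma t1 : pa * pa = 1. Proof. pcase. Qed.
Lemma t2 : pb * (pb * pb) = 1. Proof. pcase. Qed.
Lemma t3 : pc * (pc * (pc * (pc * (pc * (pc * pc))))) = 1. Proof. pcase. Qed.
Lemma t4 : (pa * pb) * pc = 1. Proof. pcase. Qed.
Lemma t5 : pa <> 1. Proof. move/permP/(_ ord0); rewrite !permE. move/(congr1 val). by []. Qed.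
Definition S7G : Group :=
  @mkGroup {perm 'I_7} mulg 1 invg (@mulgA _) (@mul1g _) (@mulVg _).
Lemma S7rel : rel237 S7G pa pb pc.
Proof. by rewrite /rel237 /= t1 t2 t3 t4. Qed.
End S7.

Lemma hom1 (G H : Group) f : hom G H f -> f (gone G) = gone H.
Proof.
move=> hf; apply: (mulg_canl (f (gone G))).
by rewrite -hf gmul1g mulg1'.
Qed.
Lemma homV (G H : Group) f a : hom G H f -> f (ginv G a) = ginv H (f a).
Proof.
move=> hf; apply: esym; apply: inv_uniq; rewrite -hf mulgV'; exact: hom1.
Qed.

Section Main.
Variable G : Group.
Local Notation "a ** b" := (gmul G a b) (at level 40, left associativity).
Local Notation one := (gone G).
Local Notation inv := (ginv G).
Variables x y z : G.
Hypothesis pres : presents237 G x y z.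
Hypothesis RO : right_orderable G.
Hypothesis perf : perfect G.

Lemma gen M : normal_subgroup G M -> M x -> M y -> M z -> forall g, M g.
Proof.
move=> nM Mx My Mz g.
have [_ U] := pres.
pose Q := QG nM.
have rel : rel237 Q (gone Q) (gone Q) (gone Q) by rewrite /rel237 !gmul1g.
have h2 : hom G Q (fun _ => gone Q) by move=> a b; rewrite gmul1g.
have := (U Q _ _ _ rel).2 (phi M) _ (phi_hom nM) h2.
move=> /(_ _ _ _ g)/phi_ker; apply; exact/phi_ker.
Qed.

Lemma x_ne1 : x <> one.
Proof.
move=> E; have [_ U] := pres.
have [[f [hf [fx _]]] _] := U S7G _ _ _ S7rel.
apply: t5; rewrite -fx E; exact: hom1 hf.
Qed.

Lemma c_notin M P : normal_subgroup G M -> cone G M P -> proper G M -> ~ M (x ** x).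
Proof.
move=> nM cP [g0 ng0] Mc; apply: ng0.
have [Pm [NP [Pd Pt]]] := cP.
have sM := nM.1.
have tors w g : (P g -> P w) -> (P (inv g) -> P (inv w)) -> M w -> M g.
  move=> H1 H2 Mw; case: (Pt g) => [//|[Pg|Pg]]; exfalso.
    exact: Pd (H1 Pg) Mw.
  by apply: (Pd _ (H2 Pg)); apply: subV.
have [[e1 [e2 e3]] _] := pres.
apply: (@gen M nM).
- apply: (tors (x ** x)) => // H; [by apply: Pm|by rewrite invM'; apply: Pm].
- apply: (tors (y ** (y ** y))); last by rewrite -e1.
  + by move=> H; repeat (apply: (Pm); try done).
  + by move=> H; rewrite !invM'; repeat (apply: (Pm); try done).
- apply: (tors (z ** (z ** (z ** (z ** (z ** (z ** z))))))); last by rewrite -e2 -e1.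
  + by move=> H; repeat (apply: (Pm); try done).
  + by move=> H; rewrite !invM'; repeat (apply: (Pm); try done).
Qed.

Lemma triv_pnr : prop_normal_rrc G (fun g => g = one).
Proof.
have sT : subgroup G (fun g => g = one).
  split=> //; split; [by move=> a b -> ->; rewrite gmul1g|by move=> a ->; rewrite inv1'].
split; [split=> // g h ->|split].
  by rewrite mulg1' gmulVg.
- split=> //; case: RO => le [r1 [r2 r]]; exists le; split; first by split.
  by move=> h1 h2 g -> -> H1 H2; apply: r2.
- by exists x; apply: x_ne1.
Qed.

Lemma central_gen (H : Group) f w : hom G H f ->
  gmul H w (f x) = gmul H (f x) w -> gmul H w (f y) = gmul H (f y) w ->
  gmul H w (f z) = gmul H (f z) w -> forall g, gmul H w (f g) = gmul H (f g) w.
Proof.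
move=> hf cx cy cz g.
have [[e1 [e2 e3]] U] := pres.
have rel : rel237 H (f x) (f y) (f z).
  by rewrite /rel237 -!hf e1 e2 e3.
pose f1 a := gmul H (gmul H w (f a)) (ginv H w).
have hf1 : hom G H f1.
  by move=> a b; rewrite /f1 hf !gmulA mulgKV'.
have E : forall a, gmul H w (f a) = gmul H (f a) w -> f1 a = f a.
  by move=> a ca; rewrite /f1 ca mulgK'.
have := (U H _ _ _ rel).2 f1 f hf1 hf (E _ cx) (E _ cy) (E _ cz) g.
rewrite /f1 => Eg; apply: (mulg_canr _ _ (ginv H w)); by rewrite mulgK'.
Qed.

Lemma abelian_comm (H : Group) a b : abelian H ->
  gmul H (gmul H (ginv H a) (ginv H b)) (gmul H a b) = gone H.
Proof.
move=> ab; rewrite (ab (ginv H a)) -gmulA mulKg'; exact: gmulVg.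
Qed.

Lemma central_normal (H : Group) : normal_subgroup H (central H).
Proof.
have cinv a : central H a -> central H (ginv H a).
  move=> ca h; apply: (mulg_canl a); by rewrite mulKVg' gmulA ca mulgK'.
split; first split; [|split|].
- by move=> h; rewrite gmul1g mulg1'.
- by move=> a b ca cb h; rewrite -gmulA cb gmulA ca -gmulA.
- exact: cinv.
- move=> g h ch.
  have -> : gmul H (gmul H (ginv H g) h) g = h by rewrite -gmulA ch gmulA gmulVg gmul1g.
  exact: ch.
Qed.

Lemma quotient_good N : maximal_prop_normal_rrc G N ->
  exists (Q : Group) (phi : G -> Q),
       hom G Q phi /\ (forall q : Q, exists g, phi g = q) /\
       (forall g, phi g = gone Q <-> N g) /\
       good_group Q.
Proof.
move=> [[nN [rrcN prN]] maxN].
have [P cP] := cone_of_rrc nN rrcN.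
pose Q := QG nN.
have hphi := phi_hom nN.
exists Q, (phi N); split=> //; split; first exact: phi_surj'.
split; first exact: phi_ker.
pose c0 : Q := phi N (x ** x).
have c0ne : c0 <> gone Q by move=> /phi_ker; apply: c_notin nN cP prN.
have [[e1 [e2 e3]] _] := pres.
have c0c : central Q c0.
  move=> q; case: (phi_surj' nN q) => g <-.
  apply: (central_gen _ _ _ hphi).
  - by rewrite /c0 -!hphi !gmulA.
  - by rewrite /c0 e1 -!hphi !gmulA.
  - by rewrite /c0 e1 e2 -!hphi !gmulA.
have nab : ~ abelian Q.
  move=> ab; apply: c0ne.
  rewrite /c0; case: (perf (x ** x)) => l ->; elim: l => [|[a b] l IH] /=.
    by [].
  rewrite hphi IH mulg1' !hphi !(homV _ _ _ _ hphi); exact: (abelian_comm _ _ _ ab).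
have ncent : exists g : Q, ~ central Q g.
  apply: NNPP => H; apply: nab => a b.
  by apply: NNPP => nE; apply: H; exists a => ca; apply: nE; apply: ca.
split=> //; split; first exact: QG_ro cP.
split.
  move=> M nM rrcM [q0 nq0] [h [Mh hne]].
  have [PM cPM] := cone_of_rrc nM rrcM.
  pose M' g := M (phi N g).
  pose P' g := PM (phi N g).
  have sM := nM.1.
  have nM' : normal_subgroup G M'.
    split; first split; [|split|].
    - exact: sub1 sM.
    - by move=> a b Ma Mb; rewrite /M' hphi; apply: subM.
    - by move=> a Ma; rewrite /M' (homV _ _ _ _ hphi); apply: subV.
    - by move=> g h' Mh'; rewrite /M' !hphi (homV _ _ _ _ hphi); apply: nM.2.
  have cP' : cone G M' P'.
    have [Pm [NP [Pd Pt]]] := cPM.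
    split; [|split; [|split]].
    - by move=> a b Pa Pb; rewrite /P' hphi; apply: Pm.
    - by move=> n p Mn Pp; rewrite /P' hphi; apply: NP.
    - by move=> g; apply: Pd.
    - by move=> g; rewrite /P' /M' (homV _ _ _ _ hphi); apply: Pt.
  have pM' : prop_normal_rrc G M'.
    split=> //; split; first exact: rrc_of_cone nM' RO cP'.
    by case: (phi_surj' nN q0) => g E; exists g; rewrite /M' E.
  have NM' : forall g, N g -> M' g.
    by move=> g /phi_ker; rewrite /M' => ->; exact: sub1 sM.
  case: (phi_surj' nN h) => g E; apply: hne; rewrite -E; apply/phi_ker.
  by apply: (maxN M' pM' NM'); rewrite /M' E.
split.
  move=> [_ Hs]; case: (Hs _ (central_normal Q)) => H.
    exact: c0ne (H _ c0c).
  by apply: nab => a b; apply: H.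
split=> //; by exists c0.
Qed.

Lemma exists_max : exists N, maximal_prop_normal_rrc G N.
Proof.
pose Pz (X : set G) := prop_normal_rrc G (fun g => X g \/ g = one).
have ext (A B : G -> Prop) : (forall g, A g <-> B g) -> A = B.
  by move=> H; apply: functional_extensionality => g; apply: propositional_extensionality.
have cone_of N : prop_normal_rrc G N -> normal_subgroup G N /\ exists P, cone G N P.
  by move=> [nN [rN _]]; split=> //; apply: cone_of_rrc.
have [A [PA Amax]] : exists A, Pz A /\ forall B, A `<` B -> ~ Pz B.
  apply: Zorn_bigcup => F FP tot.
  case: (classic (exists X, F X)) => [[X0 FX0]|nF].
    pose C (N : G -> Prop) := exists X, F X /\ N = (fun g => X g \/ g = one).
    have HC N : C N -> prop_normal_rrc G N by move=> [X [FX ->]]; apply: FP.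
    have := @chain_union G RO (fun g => g = x ** x) C
      (fun N CN => cone_of N (HC N CN)).
    have E : (fun g => exists N, C N /\ N g) = (fun g => (\bigcup_(X in F) X) g \/ g = one).
      apply: ext => g; split.
        move=> [N [[X [FX ->]] [Xg|g1]]]; [by left; exists X|by right].
      move=> [[X FX Xg]|g1]; first by exists (fun g => X g \/ g = one); split; [exists X|left].
      by exists (fun g => X0 g \/ g = one); split; [exists X0|right].
    rewrite /Pz -E; apply.
    - move=> N CN g Ng /= gx; rewrite gx in Ng.
      have [nN [P cP]] := cone_of N (HC N CN).
      exact: (@c_notin N P nN cP (HC N CN).2.2 Ng).
    - by exists (x ** x).
    - move=> N1 N2 [X1 [F1 ->]] [X2 [F2 ->]]; case: (tot _ _ F1 F2) => S.
        by left; move=> g [Xg|g1]; [left; apply: S|right].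
      by right; move=> g [Xg|g1]; [left; apply: S|right].
    - by exists (fun g => X0 g \/ g = one); exists X0.
  rewrite /Pz; have -> : (fun g => (\bigcup_(X in F) X) g \/ g = one) = (fun g => g = one).
    apply: ext => g; split; last by right.
    by move=> [[X FX _]|//]; exfalso; apply: nF; exists X.
  exact: triv_pnr.
exists (fun g => A g \/ g = one); split=> // M pM sub g Mg.
apply: NNPP => nAg.
have PM : Pz M.
  rewrite /Pz; have -> : (fun g => M g \/ g = one) = M; last exact: pM.
  apply: ext => h; split; last by left.
  by move=> [//|->]; exact: sub1 pM.1.1.
have AM : A `<` M.
  split; first by move=> h Ah; apply: sub; left.
  by move=> /(_ g Mg) Ag; apply: nAg; left.
exact: (Amax M AM PM).
Qed.

End Main.

Theorem mainTheorem4 (G : Group) (x y z : G) :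
  presents237 G x y z ->
  right_orderable G ->   (* Bergman *)
  perfect G ->           (* Bergman *)
  (exists Q : Group, good_group Q) /\
  (exists N : G -> Prop, maximal_prop_normal_rrc G N) /\
  (forall N : G -> Prop, maximal_prop_normal_rrc G N ->
     exists (Q : Group) (phi : G -> Q),
       hom G Q phi /\ (forall q : Q, exists g, phi g = q) /\
       (forall g, phi g = gone Q <-> N g) /\
       good_group Q).
Proof.
move=> pres RO perf.
have [N HN] := @exists_max G x y z pres RO.
split; last by split; [exists N|exact: (@quotient_good G x y z pres RO perf)].
have [Q [phi [_ [_ [_ gQ]]]]] := @quotient_good G x y z pres RO perf N HN.
by exists Q.
Qed.
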